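(* Let $0<\underline\beta<\bar\beta$, let $\mathcal P$ be a parameter set, let $G,\tilde G>0$ satisfy the approximation property (AP) of the context, let $a>1$ satisfy $\frac{G}{a}\big(\frac{\ln a}{\ln2}+3\big)^{3/2}\le1$, and let the models $\mathcal S_m$, $m\ge2$, be as in the context. Then there exists a constant $c_{\underline\beta,\bar\beta}>0$ such that for all $\beta\in[\underline\beta,\bar\beta]$, all $s\in\mathcal H(\beta,\mathcal P)$ and all $m\ge2$, $$\mathrm{KL}(s,\mathcal S_m)\le c_{\underline\beta,\bar\beta}\,\underline\lambda(m)^\beta.$$
   Context: $\psi(x)=\pi^{-1/2}e^{-x^2}$, $\psi_\sigma(x)=\sigma^{-1}\psi(x/\sigma)$; $\mathrm{KL}(s,t)=\int s\ln(s/t)$, $\mathrm{KL}(s,\mathcal S)=\inf_{t\in\mathcal S}\mathrm{KL}(s,t)$. For $\beta>0$, $r$ is the largest integer strictly less than $\beta$; a parameter set $\mathcal{P}=\{\gamma,l^+,L,\varepsilon,C,\alpha,\xi,M\}$ (polynomial $L$, positive constants) defines $\mathcal H(\beta,\mathcal P)$: probability densities $f$ with $\ln f$ $r$ times differentiable, $|(\ln f)^{(r)}(x)-(\ln f)^{(r)}(y)|\le r!L(x)|y-x|^{\beta-r}$ for $|x-y|\le\gamma$, $|(\ln f)^{(j)}(0)|\le l^+$; $\int|(\ln f)^{(j)}|^{(2\beta+\varepsilon)/j}f\le C$ ($j=1..r$), $\int|L|^{2+\varepsilon/\beta}f\le C$; $f\le M\psi$; $f>0$ nondecreasing on $(-\infty,-\alpha)$,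 nonincreasing on $(\alpha,\infty)$, $f\ge\xi$ on $[-\alpha,\alpha]$. (AP): for each $\beta\in[\underline\beta,\bar\beta]$ there are $\bar\sigma(\beta)\in(0,1)$ and $c_\beta>0$, both continuous in $\beta$, such that for all $f\in\mathcal H(\beta,\mathcal P)$ and $\sigma\in(0,\bar\sigma(\beta))$ there exists a mixture $\sum_{u=1}^{m'}p_u\psi_\sigma(\cdot-\mu_u)$ with $m'<G\sigma^{-1}|\ln\sigma|^{3/2}$, $|\mu_u|\le\tilde G|\ln\sigma|^{1/2}$ and $\mathrm{KL}(f,\cdot)\le c_\beta\sigma^{2\beta}$. Models: $\sqrt{\underline\lambda(m)}=a\,m^{-1}(\ln m)^{3/2}$, $\bar\mu(m)=\tilde G|\ln\sqrt{\underline\lambda(m)}|^{1/2}$, $\bar\lambda$ a constant with $\bar\lambda>\underline\lambda(m)$ for all $m$, and $\mathcal{S}_m=\{\sum_{u=1}^m p_u\psi_{\sigma_u}(\cdot-\mu_u):\mu_u\in[-\bar\mu(m),\bar\mu(m)],\ \sigma_u^2\in[\underline\lambda(m),\bar\lambda],\ p_u\in[0,1],\ \sum p_u=1\}$. *)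

(* Defs.v *)
From HB Require Import structures.
From mathcomp Require Import all_boot all_order all_algebra.
From mathcomp Require Import all_classical all_reals all_analysis.
Set Implicit Arguments. Unset Strict Implicit. Unset Printing Implicit Defensive.
Import Order.TTheory GRing.Theory Num.Theory numFieldNormedType.Exports.
Local Open Scope classical_set_scope.
Local Open Scope ring_scope.

Section defs.
Variable R : realType.

Definition psi (x : R) : R := (Num.sqrt pi)^-1 * expR (- x ^+ 2).
Definition psis (sigma x : R) : R := sigma^-1 * psi (x / sigma).

Definition KL (s t : R -> R) : \bar R :=
  (\int[@lebesgue_measure R]_(x in setT) (s x * ln (s x / t x))%:E)%E.

Definition KLset (s : R -> R) (S : set (R -> R)) : \bar R :=
  ereal_inf [set KL s t | t in S].

(* r = largest integer strictly less than beta (for beta > 0): ceil(beta) - 1 *)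
Definition rbeta (beta : R) : nat := `|(Num.ceil beta - 1)%R|%N.

Definition ntimes_diff (n : nat) (g : R -> R) : Prop :=
  forall k : nat, (k < n)%N -> forall x : R, derivable (derive1n k g) x 1.

Record param := Param {
  p_gamma : R; p_lplus : R; p_L : {poly R}; p_eps : R; p_C : R;
  p_alpha : R; p_xi : R; p_M : R }.

Definition param_ok (P : param) : Prop :=
  0 < p_gamma P /\ 0 < p_lplus P /\ 0 < p_eps P /\ 0 < p_C P /\
  0 < p_alpha P /\ 0 < p_xi P /\ 0 < p_M P.

Definition is_density (f : R -> R) : Prop :=
  measurable_fun setT f /\ (forall x, 0 <= f x) /\
  (\int[@lebesgue_measure R]_(x in setT) (f x)%:E = 1)%E.

Definition Hclass (beta : R) (P : param) (f : R -> R) : Prop :=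
  let r := rbeta beta in
  let lf := fun x => ln (f x) in
  let L := fun x => (p_L P).[x] in
  is_density f /\
  ntimes_diff r lf /\
  (forall x y, `|x - y| <= p_gamma P ->
     `|derive1n r lf x - derive1n r lf y| <=
       r`!%:R * L x * `|y - x| `^ (beta - r%:R)) /\
  (forall j : nat, (j <= r)%N -> `|derive1n j lf 0| <= p_lplus P) /\
  (forall j : nat, (1 <= j <= r)%N ->
     (\int[@lebesgue_measure R]_(x in setT)
        ((`|derive1n j lf x| `^ ((2 * beta + p_eps P) / j%:R)) * f x)%:E
        <= (p_C P)%:E)%E) /\
  (\int[@lebesgue_measure R]_(x in setT)
      ((`|L x| `^ (2 + p_eps P / beta)) * f x)%:E <= (p_C P)%:E)%E /\
  (forall x, f x <= p_M P * psi x) /\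
  (forall x, 0 < f x) /\
  (forall x y, x <= y < - p_alpha P -> f x <= f y) /\
  (forall x y, p_alpha P < x <= y -> f y <= f x) /\
  (forall x, - p_alpha P <= x <= p_alpha P -> p_xi P <= f x).

Definition mixture (m : nat) (p mu sigma : 'I_m -> R) : R -> R :=
  fun x => \sum_(u < m) p u * psis (sigma u) (x - mu u).

Definition weights (m : nat) (p : 'I_m -> R) : Prop :=
  (forall u, 0 <= p u <= 1) /\ \sum_(u < m) p u = 1.

Definition AP (lbeta ubeta G Gt : R) (P : param) : Prop :=
  exists sigbar c : R -> R,
    {within `[lbeta, ubeta], continuous sigbar} /\
    {within `[lbeta, ubeta], continuous c} /\
    forall beta, lbeta <= beta <= ubeta ->
      0 < sigbar beta < 1 /\ 0 < c beta /\
      forall f, Hclass beta P f ->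
      forall sigma, 0 < sigma < sigbar beta ->
      exists (m' : nat) (p mu : 'I_m' -> R),
        m'%:R < G * sigma^-1 * `|ln sigma| `^ (3/2) /\
        weights p /\
        (forall u, `|mu u| <= Gt * `|ln sigma| `^ (1/2)) /\
        (KL f (mixture p mu (fun _ => sigma)) <= (c beta * sigma `^ (2 * beta))%:E)%E.

Definition lamlow (a : R) (m : nat) : R :=
  (a * m%:R^-1 * ln m%:R `^ (3/2)) ^+ 2.
Definition mubar (Gt a : R) (m : nat) : R :=
  Gt * `|ln (Num.sqrt (lamlow a m))| `^ (1/2).

Definition Smodel (Gt a lambar : R) (m : nat) : set (R -> R) :=
  [set t | exists (p mu sigma : 'I_m -> R),
     t = mixture p mu sigma /\ weights p /\
     (forall u, - mubar Gt a m <= mu u <= mubar Gt a m) /\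
     (forall u, 0 < sigma u /\ lamlow a m <= sigma u ^+ 2 <= lambar)].

End defs.

(* Main.v *)
Require Import Defs.
From HB Require Import structures.
From mathcomp Require Import all_boot all_order all_algebra.
From mathcomp Require Import all_classical all_reals all_analysis.
From mathcomp Require Import measurable_realfun normal_distribution.
From mathcomp Require Import ring lra.
Import Order.TTheory GRing.Theory Num.Theory numFieldNormedType.Exports.
Local Open Scope classical_set_scope.
Local Open Scope ring_scope.

Lemma sq_expR_le (R : realType) (x : R) :
  x ^+ 2 * expR (- x ^+ 2) <= 2 * expR (- (x ^+ 2 / 2)).
Proof.
have -> : - x ^+ 2 = - (x ^+ 2 / 2) + - (x ^+ 2 / 2) by field.
rewrite expRD mulrA ler_wpM2r ?expR_ge0 //.
have h := expR_ge1Dx (x ^+ 2 / 2).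
have e0 : 0 < expR (x ^+ 2 / 2) by exact: expR_gt0.
rewrite expRN -[leRHS](@mulfK _ (expR (x ^+ 2 / 2))) ?gt_eqF //.
rewrite ler_pM2r ?invr_gt0 // ; last first.
nra.
Qed.

Lemma int_le_ge0 (R : realType) (f g : R -> R) :
  measurable_fun setT f -> measurable_fun setT g ->
  (forall x, 0 <= g x) -> (forall x, f x <= g x) ->
  (\int[@lebesgue_measure R]_(x in setT) (f x)%:E <=
   \int[@lebesgue_measure R]_(x in setT) (g x)%:E)%E.
Proof.
move=> mf mg g0 fg.
rewrite integralE.
have h1 : (\int[@lebesgue_measure R]_(x in setT) ((EFin \o f)^\+ x) <=
   \int[@lebesgue_measure R]_(x in setT) (g x)%:E)%E.
  apply: (ge0_le_integral _ measurableT).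
  - by move=> x _; exact: funepos_ge0.
  - apply: measurable_funepos; exact/measurable_EFinP.
  - exact/measurable_EFinP.
  - move=> x _; rewrite funeposE /= -EFin_max lee_fin.
    by rewrite ge_max fg g0.
have h2 : (0 <= \int[@lebesgue_measure R]_(x in setT) ((EFin \o f)^\- x))%E.
  by apply: integral_ge0 => x _; exact: funeneg_ge0.
by rewrite -[X in (_ <= X)%E]sube0; exact: leeB.
Qed.

Lemma gauss_KL (R : realType) (M s0 : R) : 0 < M -> 0 < s0 ->
  exists K : R, forall s : R -> R, measurable_fun setT s -> (forall x, 0 < s x) ->
   (\int[@lebesgue_measure R]_(x in setT) (s x)%:E = 1)%E ->
   (forall x, s x <= M * psi x) ->
   (KL s (psis s0) <= K%:E)%E.
Proof.
move=> M0 s00.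
pose sp : R := (Num.sqrt pi)^-1.
have sp0 : 0 < sp by rewrite /sp invr_gt0 sqrtr_gt0 pi_gt0.
pose c0 := ln (s0^-1 * sp).
pose A : R := `|ln M + ln sp - c0|.
have p1 : 0 < normal_peak (1 : R) by rewrite normal_peak_gt0 // oner_neq0.
pose B := (s0 ^+ 2)^-1 * (M * (sp * 2)) / normal_peak 1.
have B0 : 0 <= B.
  rewrite /B; apply: mulr_ge0; last by rewrite invr_ge0 ltW.
  apply: mulr_ge0; first by rewrite invr_ge0 sqr_ge0.
  by apply: mulr_ge0; [exact: ltW | apply: mulr_ge0; [exact: ltW|]].
exists (A + B) => s ms spos s1 sM.
have tE x : psis s0 x = expR (c0 - (x / s0) ^+ 2).
  rewrite /psis /psi expRD lnK; last by rewrite posrE mulr_gt0 // invr_gt0.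
  by rewrite mulrA.
have fE x : s x * ln (s x / psis s0 x) = s x * (ln (s x) - (c0 - (x / s0) ^+ 2)).
  by rewrite tE ln_div ?expRK // posrE ?expR_gt0.
rewrite /KL.
under eq_integral => x _ do rewrite fE.
apply: le_trans (@int_le_ge0 R _ (fun x => A * s x + B * normal_pdf 0 1 x) _ _ _ _) _.
- apply: measurable_funM => //; apply: measurable_funB.
    exact: (measurableT_comp (@measurable_ln R) ms).
  apply: measurable_funB => //; apply: measurable_funX.
  exact: measurable_funM.
- apply: measurable_funD; apply: measurable_funM => //.
  exact: measurable_normal_pdf.
- move=> x; apply: addr_ge0; apply: mulr_ge0.
  + exact: normr_ge0.
  + exact: ltW.
  + exact: B0.
  + exact: normal_pdf_ge0.
- move=> x.
  have sx := spos x.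
  have h1 : ln (s x) <= ln M + ln sp - x ^+ 2.
    have -> : ln M + ln sp - x ^+ 2 = ln (M * psi x).
      by rewrite /psi lnM ?posrE ?mulr_gt0 ?expR_gt0 // lnM ?posrE ?expR_gt0 // expRK addrA.
    by rewrite ler_ln ?posrE ?mulr_gt0 ?expR_gt0 // /psi mulr_gt0 // expR_gt0.
  have h2 : ln M + ln sp - c0 <= A by exact: ler_norm.
  have h3 : s x * (ln (s x) - (c0 - (x / s0) ^+ 2)) <= A * s x + (x / s0) ^+ 2 * s x.
    have hx : 0 <= x ^+ 2 by exact: sqr_ge0.
    nra.
  apply: (le_trans h3); rewrite lerD2l.
  have h4 : (x / s0) ^+ 2 * s x <= (x / s0) ^+ 2 * (M * psi x).
    by rewrite ler_wpM2l ?sqr_ge0.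
  apply: (le_trans h4).
  rewrite /normal_pdf oner_eq0 /normal_fun subr0 expr1n mulNr.
  have h := @sq_expR_le R x.
  rewrite /B /psi -/sp.
  have -> : (x / s0) ^+ 2 * (M * (sp * expR (- x ^+ 2))) =
    (s0 ^+ 2)^-1 * M * sp * (x ^+ 2 * expR (- x ^+ 2)).
    by rewrite exprMn exprVn; ring.
  have -> : (s0 ^+ 2)^-1 * (M * (sp * 2)) / normal_peak 1 *
     (normal_peak 1 * expR (- (x ^+ 2 / 2))) =
    (s0 ^+ 2)^-1 * M * sp * (2 * expR (- (x ^+ 2 / 2))).
    by field; rewrite (gt_eqF p1) (gt_eqF s00).
  rewrite ler_wpM2l //.
  apply: mulr_ge0; [apply: mulr_ge0; [by rewrite invr_ge0 sqr_ge0|exact: ltW]|exact: ltW].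
under eq_integral => x _ do rewrite EFinD !EFinM.
have A0 : 0 <= A := normr_ge0 _.
have mn : measurable_fun setT (fun x => (normal_pdf (0:R) 1 x)%:E).
  by apply/measurable_EFinP; exact: measurable_normal_pdf.
have ms' : measurable_fun setT (fun x => (s x)%:E) by exact/measurable_EFinP.
rewrite ge0_integralD //.
- rewrite ge0_integralZl_EFin //; last by move=> x _; rewrite lee_fin ltW.
  rewrite ge0_integralZl_EFin //; last by move=> x _; rewrite lee_fin normal_pdf_ge0.
  by rewrite s1 integral_normal_pdf !mule1.
- by move=> x _; rewrite -EFinM lee_fin mulr_ge0 // ltW.
- by apply/measurable_EFinP; apply: measurable_funM.
- by move=> x _; rewrite -EFinM lee_fin mulr_ge0 // normal_pdf_ge0.
- by apply/measurable_EFinP; apply: measurable_funM => //; exact: measurable_normal_pdf.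
Qed.

Lemma lamlow_gt0 (R : realType) (a : R) (m : nat) : 0 < a -> (2 <= m)%N -> 0 < lamlow a m.
Proof.
move=> a0 m2.
have m0 : (0 < m)%N by exact: ltnW.
have l0 : 0 < ln (m%:R : R) by apply: ln_gt0; rewrite ltr1n.
rewrite /lamlow exprn_gt0 // mulr_gt0 // ?mulr_gt0 // ?invr_gt0 ?ltr0n //.
exact: powR_gt0.
Qed.

Lemma ln_ge1 (R : realType) (m : nat) : (4 <= m)%N -> 1 <= ln (m%:R : R).
Proof.
move=> m4.
have e2 : expR (2^-1 : R) <= 2.
  have h := expR_ge1Dx (- 2^-1 : R).
  have e0 : 0 < expR (2^-1 : R) by exact: expR_gt0.
  rewrite expRN in h.
  have h' : 2^-1 <= (expR (2^-1 : R))^-1 by lra.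
  rewrite -(invrK (expR _)) -[leRHS](invrK (2 : R)).
  by rewrite lef_pV2 ?posrE ?invr_gt0 //.
have e4 : expR (1 : R) <= 4.
  have -> : (1 : R) = 2^-1 + 2^-1 by field.
  rewrite expRD.
  have e0 : 0 < expR (2^-1 : R) by exact: expR_gt0.
  nra.
have m0 : (0 < m)%N := leq_trans (isT : (0 < 4)%N) m4.
suff : ln (expR (1:R)) <= ln (m%:R : R) by rewrite expRK.
rewrite ler_ln ?posrE ?expR_gt0 ?ltr0n //.
apply: (le_trans e4); by rewrite ler_nat.
Qed.

Lemma pad_sum (R : realType) (m m' : nat) (F : 'I_m'.+1 -> R) : (m'.+1 <= m)%N ->
  \sum_(u < m) (if (val u < m'.+1)%N then F (inord u) else 0) = \sum_(u < m'.+1) F u.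
Proof.
move=> mm.
rewrite -big_mkcond /=.
rewrite -(big_ord_widen _ (fun n => F (inord n)) mm).
by apply: eq_bigr => u _; rewrite inord_val.
Qed.

Lemma p32 (R : realType) (x : R) : 1 <= x -> 1 <= x `^ (3/2).
Proof.
move=> x1; have e : (1:R) `^ (3/2) = 1 by rewrite powR1.
have h : (0:R) <= 3/2 by lra.
rewrite -[leLHS]e; apply: ge0_ler_powR => //; rewrite nnegrE //.
by apply: le_trans x1; exact: ler01.
Qed.

Theorem lemma7 (R : realType) (lbeta ubeta : R) (P : param R) (G Gt a lambar : R) :
  0 < lbeta -> lbeta < ubeta -> param_ok P ->
  0 < G -> 0 < Gt -> AP lbeta ubeta G Gt P ->
  1 < a -> G / a * (ln a / ln 2 + 3) `^ (3/2) <= 1 ->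
  (forall m : nat, (2 <= m)%N -> lamlow a m < lambar) ->
  exists c : R, 0 < c /\
    forall beta, lbeta <= beta <= ubeta ->
    forall s, Hclass beta P s ->
    forall m : nat, (2 <= m)%N ->
      (KLset s (Smodel Gt a lambar m) <= (c * lamlow a m `^ beta)%:E)%E.
Proof.
move=> lb0 lbub Pok G0 Gt0 HAP a1 aH lamH.
move: HAP => [sb [cf [sbc [cc Hap]]]].
have lbub' : lbeta <= ubeta := ltW lbub.
have a0 : 0 < a by apply: lt_trans a1.
have inI t : lbeta <= t <= ubeta -> t \in `[lbeta, ubeta].
  by move=> h; rewrite in_itv /=.
have [b0 b0I b0min] := EVT_min lbub' sbc.
have [b1 b1I b1max] := EVT_max lbub' cc.
have b0I' : lbeta <= b0 <= ubeta by move: b0I; rewrite in_itv.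
have b1I' : lbeta <= b1 <= ubeta by move: b1I; rewrite in_itv.
have [/andP[smin0 _] _] := Hap b0 b0I'.
have [_ [cmax0 _]] := Hap b1 b1I'.
set smin := sb b0.
set cmax := cf b1.
have lam0 : 0 < lambar.
  have := lamH 2%N isT; apply: le_lt_trans; rewrite /lamlow; exact: sqr_ge0.
have M0 : 0 < p_M P by case: Pok => [_ [_ [_ [_ [_ [_ ->]]]]]].
have sg0 : 0 < Num.sqrt lambar by rewrite sqrtr_gt0.
have [K HK] := @gauss_KL R _ _ M0 sg0.
set K' := Num.max K 0.
have L20 := @lamlow_gt0 R _ _ a0 (isT : (2 <= 2)%N).
have L30 := @lamlow_gt0 R _ _ a0 (isT : (2 <= 3)%N).
set l0 := Num.min 1 (Num.min (smin ^+ 2) (Num.min (lamlow a 2) (lamlow a 3))).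
have l00 : 0 < l0.
  by rewrite /l0 !lt_min ltr01 exprn_gt0 // L20 L30.
have l01 : l0 <= 1 by rewrite /l0 ge_min lexx.
have q0 : 0 < l0 `^ ubeta by exact: powR_gt0.
have K'0 : 0 <= K' by rewrite /K' le_max lexx orbT.
exists (cmax + K' / l0 `^ ubeta + 1); split.
  by apply: (lt_le_trans cmax0); rewrite -addrA lerDl addr_ge0 // divr_ge0 // ltW.
move=> beta hb s Hs m m2.
have hb0 : 0 <= beta by case/andP: hb => h _; apply: le_trans h; exact: ltW.
have [/andP[sbb0 sbb1] [cb0 Hf]] := Hap beta hb.
have Hs' := Hs.
move: Hs' => [[ms [_ s1]] [_ [_ [_ [_ [_ [sM [spos _]]]]]]]].
have L0 : 0 < lamlow a m := @lamlow_gt0 R _ _ a0 m2.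
have sgpos : 0 < Num.sqrt (lamlow a m) by rewrite sqrtr_gt0.
have sgL : Num.sqrt (lamlow a m) ^+ 2 = lamlow a m := sqr_sqrtr (ltW L0).
have Llam : lamlow a m < lambar := lamH m m2.
have mub0 : 0 <= mubar Gt a m := mulr_ge0 (ltW Gt0) (powR_ge0 _ _).
have Lb0 : 0 <= lamlow a m `^ beta := powR_ge0 _ _.
have cmaxc : cmax <= cmax + K' / l0 `^ ubeta + 1.
  by rewrite -addrA lerDl addr_ge0 // divr_ge0 // ltW.
case: (boolP ((3 < m)%N && (Num.sqrt (lamlow a m) < sb beta))) => [/andP[m4 sgsb] | hcase].
  have [m' [p [mu [hm' [[hw1 hw2] [hmu hKL]]]]]] :=
    Hf s Hs (Num.sqrt (lamlow a m)) (introT andP (conj sgpos sgsb)).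
  have lnm1 : 1 <= ln (m%:R : R) := @ln_ge1 R m m4.
  have mr0 : 0 < (m%:R : R) by rewrite ltr0n; exact: ltnW.
  have Q1 : 1 <= ln (m%:R : R) `^ (3/2).
    exact: p32.
  have sgE : Num.sqrt (lamlow a m) = a * m%:R^-1 * ln (m%:R : R) `^ (3/2).
    rewrite /lamlow sqrtr_sqr ger0_norm // mulr_ge0 // ?powR_ge0 // mulr_ge0 // ?ltW //.
  have sg1 : Num.sqrt (lamlow a m) < 1 := lt_trans sgsb sbb1.
  have sgm : m%:R^-1 <= Num.sqrt (lamlow a m).
    rewrite sgE.
    have mi0 : 0 < (m%:R : R)^-1 by rewrite invr_gt0.
    have aQ : 1 <= a * ln (m%:R : R) `^ (3/2) by nra.
    by rewrite mulrAC -[leLHS]mul1r ler_wpM2r // ltW.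
  have lnsg : `|ln (Num.sqrt (lamlow a m))| <= ln (m%:R : R).
    rewrite ler0_norm; last by apply: ln_le0; exact: ltW.
    rewrite lerNl -lnV ?posrE //.
    by rewrite ler_ln ?posrE ?invr_gt0.
  have powle : `|ln (Num.sqrt (lamlow a m))| `^ (3/2) <= ln (m%:R : R) `^ (3/2).
    have h : (0:R) <= 3/2 by lra.
    apply: ge0_ler_powR => //; rewrite nnegrE //.
    apply: le_trans lnm1; exact: ler01.
  have Ga : G <= a.
    have l2 : 0 < ln (2 : R) by apply: ln_gt0; rewrite ltr1n.
    have la : 0 < ln a by exact: ln_gt0.
    have X1 : 1 <= (ln a / ln 2 + 3) `^ (3/2 : R).
      apply: p32.
      have : 0 <= ln a / ln 2 by rewrite divr_ge0 // ltW.
      lra.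
    have : G / a <= 1.
      by apply: le_trans aH; rewrite ler_peMr // divr_ge0 // ltW.
    by rewrite ler_pdivrMr // mul1r.
  have bound : G * (Num.sqrt (lamlow a m))^-1 * `|ln (Num.sqrt (lamlow a m))| `^ (3/2) <= m%:R.
    apply: (@le_trans _ _ (G * (Num.sqrt (lamlow a m))^-1 * ln (m%:R : R) `^ (3/2))).
      by rewrite ler_wpM2l // mulr_ge0 // ?ltW // invr_ge0 ltW.
    have Q0 : ln (m%:R : R) `^ (3/2) != 0.
      by rewrite gt_eqF //; apply: lt_le_trans Q1; exact: ltr01.
    have -> : G * (Num.sqrt (lamlow a m))^-1 * ln (m%:R : R) `^ (3/2) = G / a * m%:R.
      rewrite sgE; field.
      by rewrite Q0 (gt_eqF a0) (gt_eqF mr0).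
    by rewrite -ler_pdivlMr // divff ?gt_eqF // ler_pdivrMr // mul1r.
  have m'm : (m' < m)%N by rewrite -(ltr_nat R); exact: lt_le_trans hm' bound.
  case: m' p mu hm' hw1 hw2 hmu hKL m'm => [|k] p mu hm' hw1 hw2 hmu hKL m'm.
    by move: hw2; rewrite big_ord0 => /eqP; rewrite eq_sym oner_eq0.
  pose P' := fun u : 'I_m => if (val u < k.+1)%N then p (inord u) else 0.
  pose MU := fun u : 'I_m => if (val u < k.+1)%N then mu (inord u) else 0.
  pose sg := Num.sqrt (lamlow a m).
  have mixE : mixture P' MU (fun _ => sg) = mixture p mu (fun _ => sg).
    apply: funext => x; rewrite /mixture.
    transitivity (\sum_(u < m) (if (val u < k.+1)%N then
        (fun v => p v * psis sg (x - mu v)) (inord u) else 0)); last exact: (@pad_sum R m k _ (ltnW m'm)).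
    by apply: eq_bigr => u _; rewrite /P' /MU; case: ifP => _ //; rewrite mul0r.
  have Hmem : [set KL s t | t in Smodel Gt a lambar m] (KL s (mixture P' MU (fun _ => sg))).
    exists (mixture P' MU (fun _ => sg)) => //; exists P', MU, (fun _ => sg).
    split => //; split; [split|split].
    - move=> u; rewrite /P'; case: ifP => _; first exact: hw1.
      by rewrite lexx ler01.
    - transitivity (\sum_(u < m) (if (val u < k.+1)%N then p (inord u) else 0)).
        by apply: eq_bigr.
      by rewrite (@pad_sum R m k _ (ltnW m'm)).
    - move=> u; rewrite /MU; case: ifP => _; last by rewrite oppr_le0 mub0.
      by rewrite -ler_norml; exact: hmu.
    - move=> u; split => //; rewrite /sg sgL lexx /=; exact: ltW.
  rewrite /KLset; apply: le_trans (ereal_inf_lbound Hmem) _.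
  rewrite mixE; apply: le_trans hKL _; rewrite lee_fin.
  have -> : sg `^ (2 * beta) = lamlow a m `^ beta.
    rewrite /sg -powR12_sqrt ?ltW // -powRrM.
    by congr (_ `^ _); field.
  rewrite ler_wpM2r //; apply: le_trans cmaxc.
  by apply: b1max; rewrite in_itv.
have LL0 : l0 <= lamlow a m.
  move: hcase; rewrite negb_and -leqNgt -leNgt => /orP[m3 | sbsg].
    have [->|->] : m = 2%N \/ m = 3%N.
      move: (m2); rewrite leq_eqVlt => /orP[/eqP <-|m2']; first by left.
      by right; apply/eqP; rewrite eqn_leq m3 m2'.
    - by rewrite /l0 !ge_min lexx !orbT.
    - by rewrite /l0 !ge_min lexx !orbT.
  have h1 : smin <= Num.sqrt (lamlow a m).
    apply: le_trans sbsg; exact: b0min.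
  have h2 : smin ^+ 2 <= lamlow a m.
    by rewrite -sgL !expr2 ler_pM // ltW.
  apply: le_trans h2; by rewrite /l0 !ge_min lexx !orbT.
have m0 : (0 < m)%N by exact: ltnW.
pose p0 := fun u : 'I_m => ((val u == 0%N)%:R : R).
have p0sum (F : R -> R) : \sum_(u < m) p0 u * F 0 = F 0.
  rewrite (bigD1 (Ordinal m0)) //= big1 ?addr0 /p0 /= ?eqxx ?mul1r //.
  move=> i hi; rewrite (_ : (val i == 0%N) = false) ?mul0r //.
  apply/negbTE; apply: contra hi => /eqP h; apply/eqP; exact: val_inj.
pose t0 := mixture p0 (fun _ => 0) (fun _ => Num.sqrt lambar).
have t0E : t0 = psis (Num.sqrt lambar).
  apply: funext => x; rewrite /t0 /mixture.
  by have := p0sum (fun y => psis (Num.sqrt lambar) (x - y)); rewrite subr0.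
have Hmem : [set KL s t | t in Smodel Gt a lambar m] (KL s t0).
  exists t0 => //; exists p0, (fun _ => 0), (fun _ => Num.sqrt lambar).
  split => //; split; [split|split].
  - by move=> u; rewrite /p0; case: eqP => _; rewrite ?lexx ?ler01.
  - by have := p0sum (fun _ => 1); under eq_bigr do rewrite mulr1.
  - by move=> u; rewrite oppr_le0 mub0.
  - by move=> u; split => //; rewrite (sqr_sqrtr (ltW lam0)) lexx andbT ltW.
rewrite /KLset; apply: le_trans (ereal_inf_lbound Hmem) _.
rewrite t0E; apply: le_trans (HK s ms spos s1 sM) _; rewrite lee_fin.
have q1 : l0 `^ ubeta <= lamlow a m `^ beta.
  apply: (@le_trans _ _ (l0 `^ beta)).
    apply: ger_powR; first by rewrite l00 l01.
    by case/andP: hb.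
  by apply: ge0_ler_powR => //; rewrite nnegrE ltW.
have KK : K <= K' by rewrite /K' le_max lexx.
apply: (le_trans KK).
have qne : l0 `^ ubeta != 0 by rewrite gt_eqF.
rewrite -[leLHS](divfK qne).
apply: (@le_trans _ _ (K' / l0 `^ ubeta * lamlow a m `^ beta)).
  by rewrite ler_wpM2l // divr_ge0 // ltW.
rewrite ler_wpM2r //.
by rewrite -addrA addrC -addrA lerDl addr_ge0 // ?ler01 // ltW.
Qed.
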